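(* Let $n > 2k+1$. On every instance, the output set of the algorithm DetMaxFind contains the uncorrupted maximum (and has exactly $2k+1$ elements).
   Context: Model: $n$ elements $x_1,\dots,x_n$, exactly $k$ corrupted (unknown to the algorithm); a tournament (comparison graph) says for each pair which is larger; restricted to uncorrupted elements it is acyclic, while comparisons involving corrupted elements are arbitrary. The uncorrupted maximum is the uncorrupted element larger than every other uncorrupted element. Algorithm DetMaxFind: start with $S=\emptyset$. For $i = 1,\dots,n$: compare $x_i$ with every element currently in $S$ (storing all results), set $S \leftarrow S \cup \{x_i\}$, and if $|S| > 2k+1$ (so $|S| = 2k+2$), choose some element $\bar x \in S$ that is smaller than at least $k+1$ other elements of $S$ (such an element exists by pigeonhole, and is found from the stored comparisons) and remove it from $S$. Output $S$. *)

(* Defs.v *)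
From mathcomp Require Import all_boot.
Set Implicit Arguments. Unset Strict Implicit. Unset Printing Implicit Defensive.

(* Elements x_0..x_{n-1} are indexed by 'I_n.
   [T i j] means "the comparison says x_i is larger than x_j". *)

Definition tournament (n : nat) (T : rel 'I_n) : Prop :=
  (forall i, ~~ T i i) /\ (forall i j, i != j -> T i j = ~~ T j i).

Definition acyclic_on (n : nat) (T : rel 'I_n) (U : {set 'I_n}) : Prop :=
  forall (x : 'I_n) (p : seq 'I_n),
    all (fun y => y \in U) (x :: p) -> ~~ cycle T (x :: p).

Definition uncorrupted_max (n : nat) (T : rel 'I_n) (C : {set 'I_n}) (m : 'I_n)
  : Prop :=
  m \notin C /\ forall y, y \notin C -> y != m -> T m y.

(* One iteration of DetMaxFind processing element x: S' is a possible
   resulting set (the removal choice is nondeterministic). *)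
Definition detmax_step (n k : nat) (T : rel 'I_n) (x : 'I_n)
  (S S' : {set 'I_n}) : Prop :=
  let S1 := x |: S in
  if #|S1| > 2 * k + 1 then
    exists2 xb, xb \in S1 &
      (k + 1 <= #|[set y in S1 | T y xb]|) /\ S' = S1 :\ xb
  else S' = S1.

(* A complete run of DetMaxFind: S 0 = empty and S i.+1 arises from S i by
   processing x_i; the output is S n. *)
Definition detmax_run (n k : nat) (T : rel 'I_n) (S : nat -> {set 'I_n}) : Prop :=
  S 0 = set0 /\ forall i : 'I_n, detmax_step k T i (S i) (S i.+1).

(* Main.v *)
Require Import Defs.
From mathcomp Require Import all_boot.
From mathcomp Require Import zify.

Theorem mainTheorem5 (n k : nat) (T : rel 'I_n) (C : {set 'I_n})
  (S : nat -> {set 'I_n}) (m : 'I_n) :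
  2 * k + 1 < n ->
  #|C| = k ->
  tournament T ->
  acyclic_on T (~: C) ->
  uncorrupted_max T C m ->
  detmax_run k T S ->
  m \in S n /\ #|S n| = 2 * k + 1.
Proof.
move=> hn hC [Tirr Tanti] _ [mC mmax] [S0 Hstep].
have key : forall S1 : {set 'I_n}, ~ (k + 1 <= #|[set y in S1 | T y m]|).
  move=> S1 hk.
  have : [set y in S1 | T y m] \subset C.
    apply/subsetP => y; rewrite inE => /andP [_ Tym].
    apply/negPn/negP => yC.
    have ym : y != m by apply/eqP => e; move: Tym; rewrite e (negbTE (Tirr m)).
    have := mmax y yC ym.
    by rewrite (Tanti m y) ?Tym // eq_sym.
  move/subset_leq_card; rewrite hC; lia.
have inv : forall i, i <= n ->
  [/\ S i \subset [set j : 'I_n | j < i], #|S i| = minn i (2 * k + 1)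
    & (m < i -> m \in S i)].
  elim=> [_|i IH hi].
    by rewrite S0 cards0 sub0set; split => //; rewrite min0n.
  have hi' : i < n by [].
  have [Hsub Hcard Hm] := IH (ltnW hi).
  have := Hstep (Ordinal hi'); rewrite /detmax_step /=.
  set S1 := _ |: _.
  have niS : Ordinal hi' \notin S i.
    apply/negP => /(subsetP Hsub); by rewrite inE ltnn.
  have c1 : #|S1| = (minn i (2 * k + 1)).+1 by rewrite cardsU1 niS Hcard.
  have sub1 : S1 \subset [set j : 'I_n | j < i.+1].
    apply/subsetP => j; rewrite !inE => /orP [/eqP -> //|/(subsetP Hsub)].
    by rewrite inE => /ltnW.
  have m1 : m < i.+1 -> m \in S1.
    rewrite ltnS leq_eqVlt => /orP [/eqP e|lt].
      by rewrite !inE; apply/orP; left; apply/eqP; apply: val_inj.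
    by rewrite !inE Hm ?orbT.
  case: ifP => hgt.
    case=> xb xbin [hk ->]; split.
    - by apply: subset_trans sub1; apply: subsetDl.
    - have c2 := cardsD1 xb S1; rewrite xbin /= in c2; rewrite c2 in c1 hgt; move: c1 hgt; rewrite add1n ltnS; case=> c1 hgt; rewrite c1 in hgt *; lia.
    - move=> mlt; rewrite in_setD1 m1 // andbT.
      apply/eqP => e; subst xb; exact: key hk.
  move=> ->; split => //.
  rewrite c1; move/negbT: hgt; rewrite -leqNgt c1 => hgt; lia.
have [_ c mS] := inv n (leqnn n).
split; first exact: mS (ltn_ord m).
by rewrite c; lia.
Qed.
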